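(* Let $k\ge3$. Define the planar $2k$-terminal network $(G,c)$: non-terminal vertices $u_{i,j}$ for $1\le i,j\le k$ ($i$ the column, $j$ the row); terminals $v_1,\dots,v_k,h_1,\dots,h_k$, with $v_j$ adjacent only to $u_{1,j}$ and $h_i$ adjacent only to $u_{i,1}$; grid edges $u_{i,j}u_{i+1,j}$ ($1\le i\le k-1$, $1\le j\le k$) and $u_{i,j}u_{i,j+1}$ ($1\le i\le k$, $1\le j\le k-1$). Costs: every terminal edge costs $k^4$; each edge $u_{i,k}u_{i+1,k}$ and each edge $u_{k,j}u_{k,j+1}$ costs $k^4$; each edge $u_{i,j}u_{i+1,j}$ with $i,j\le k-1$ costs $1$; each edge $u_{i,j}u_{i,j+1}$ with $i,j\le k-1$ costs $1-\varepsilon_{i,j}$ where $\varepsilon_{i,j}=j/k^4$. For $1\le i,j\le k-1$ let $S_{i,j}=\{h_1,\dots,h_i,v_1,\dots,v_j\}$. Then for all $1\le i,j\le k-1$, the cut $(W,V(G)\setminus W)$ with $W=S_{i,j}\cup\{u_{\alpha,\beta}:1\le\alpha\le i,\,1\le\beta\le j\}$ is the unique minimum-cost $S_{i,j}$-separating cut of $(G,c)$, and its cost is $i+j-\sum_{\alpha=1}^{i}\varepsilon_{\alpha,j}$.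
   Context: The terminal set is $Q=\{v_1,\dots,v_k,h_1,\dots,h_k\}$. A cut $(W,V(G)\setminus W)$ is $S$-separating if $W\cap Q\in\{S,Q\setminus S\}$; its cost is the total cost of edges with exactly one endpoint in $W$. Unique means every other $S_{i,j}$-separating cut has strictly larger cost. *)

(* Defs.v *)
From HB Require Import structures.
From mathcomp Require Import all_boot all_order all_algebra.
Set Implicit Arguments. Unset Strict Implicit. Unset Printing Implicit Defensive.
Import Order.TTheory GRing.Theory Num.Theory.
Local Open Scope ring_scope.

(* Vertices of the 2k-terminal grid network, 0-based indices:
   inl (a, b)   = u_{a+1, b+1}   (a = column, b = row)
   inr (inl b)  = v_{b+1}
   inr (inr a)  = h_{a+1}                                           *)
Definition vertex (k : nat) : finType := (('I_k * 'I_k) + ('I_k + 'I_k))%type.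

Definition uv (k : nat) (a b : 'I_k) : vertex k := inl (a, b).
Definition vt (k : nat) (b : 'I_k) : vertex k := inr (inl b).
Definition ht (k : nat) (a : 'I_k) : vertex k := inr (inr a).

Definition K4 (k : nat) : rat := (k ^ 4)%:R.

Definition eps (k : nat) (j : nat) : rat := j%:R / K4 k.

(* Oriented edge cost: nonzero only for the unique chosen orientation of an
   edge of G; 0 for non-adjacent pairs. *)
Definition cedge (k : nat) (x y : vertex k) : rat :=
  match x, y with
  | inr (inl j), inl (a, b) =>
      if ((a : nat) == 0%N) && (b == j) then K4 k else 0
  | inr (inr i), inl (a, b) =>
      if ((b : nat) == 0%N) && (a == i) then K4 k else 0
  | inl (a, b), inl (a', b') =>
      if ((b' : nat) == b) && ((a' : nat) == a.+1) then
        (if (b : nat) == k.-1 then K4 k else 1)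
      else if ((a' : nat) == a) && ((b' : nat) == b.+1) then
        (if (a : nat) == k.-1 then K4 k else 1 - eps k b.+1)
      else 0
  | _, _ => 0
  end.

Definition cost (k : nat) (x y : vertex k) : rat := cedge x y + cedge y x.

Definition cut_cost (k : nat) (W : {set vertex k}) : rat :=
  \sum_(x in W) \sum_(y in ~: W) cost x y.

Definition is_terminal (k : nat) (x : vertex k) : bool :=
  if x is inr _ then true else false.
Definition terminals (k : nat) : {set vertex k} := [set x | is_terminal x].

Definition separating (k : nat) (S W : {set vertex k}) : bool :=
  (W :&: terminals k == S) || (W :&: terminals k == terminals k :\: S).

Definition Sij (k i j : nat) : {set vertex k} :=
  [set x : vertex k | match x with
           | inr (inr a) => (a < i)%N
           | inr (inl b) => (b < j)%N
           | inl _ => false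
           end].

Definition Wij (k i j : nat) : {set vertex k} :=
  Sij k i j :|: [set x : vertex k | match x with
                         | inl (a, b) => (a < i)%N && (b < j)%N
                         | inr _ => false
                         end].

(* Main.v *)
Require Import Defs.
From HB Require Import structures.
From mathcomp Require Import all_boot all_order all_algebra zify ring lra.
Import Order.TTheory GRing.Theory Num.Theory.
Set Implicit Arguments. Unset Strict Implicit. Unset Printing Implicit Defensive.
Local Open Scope ring_scope.

Definition dd (b1 b2 : bool) : rat := (b1 != b2)%:R.
Definition XX n (W : {set vertex n.+1}) (a b : nat) : bool :=
  uv (inord a) (inord b) \in W.
Definition hc n (b : nat) : rat := if b == n then K4 n.+1 else 1.
Definition vc n (a b : nat) : rat := if a == n then K4 n.+1 else 1 - eps n.+1 b.+1.
Definition hterm n (W : {set vertex n.+1}) (a b : nat) : rat :=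
  if (a < n)%N then hc n b * dd (XX W a b) (XX W a.+1 b) else 0.
Definition vterm n (W : {set vertex n.+1}) (a b : nat) : rat :=
  if (b < n)%N then vc n a b * dd (XX W a b) (XX W a b.+1) else 0.
Definition Rr n (W : {set vertex n.+1}) (b : nat) := \sum_(a < n.+1) hterm W a b.
Definition Cc n (W : {set vertex n.+1}) (a : nat) := \sum_(b < n.+1) vterm W a b.
Definition TV n (W : {set vertex n.+1}) :=
  \sum_(b < n.+1) K4 n.+1 * dd (vt b \in W) (XX W 0 b).
Definition TH n (W : {set vertex n.+1}) :=
  \sum_(a < n.+1) K4 n.+1 * dd (ht a \in W) (XX W a 0).

Lemma sum_nat_eq n (F : 'I_n.+1 -> rat) m :
  \sum_(i < n.+1) (if (i : nat) == m then F i else 0) =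
  if (m <= n)%N then F (inord m) else 0.
Proof.
case: leqP => hm.
  rewrite (bigD1 (inord m)) //= inordK // eqxx big1 ?addr0 // => i hi.
  rewrite ifN //; apply: contra hi => /eqP him; apply/eqP; apply: val_inj.
  by rewrite /= him inordK.
rewrite big1 // => i _; case: eqP => // him.
by move: (ltn_ord i); rewrite him ltnS leqNgt hm.
Qed.

Lemma sum_nat_eqc n (c : rat) m :
  \sum_(i < n.+1) (if (i : nat) == m then c else 0) =
  if (m <= n)%N then c else 0.
Proof. exact: (sum_nat_eq (fun _ => c)). Qed.

Lemma XXE n W (a b : 'I_n.+1) : XX W a b = (inl (a, b) \in W).
Proof. by rewrite /XX !inord_val. Qed.

Lemma grid_inner n (W : {set vertex n.+1}) (a b : 'I_n.+1) :
  \sum_(p : 'I_n.+1 * 'I_n.+1) cedge (inl (a, b)) (inl p) *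
     dd (inl (a, b) \in W) (inl p \in W) = hterm W a b + vterm W a b.
Proof.
transitivity (\sum_(a' < n.+1) \sum_(b' < n.+1) cedge (inl (a, b)) (inl (a', b')) *
     dd (inl (a, b) \in W) (inl (a', b') \in W)).
  by rewrite pair_bigA; apply: eq_bigr => -[a' b'].
transitivity (\sum_(a' < n.+1) ((if (a' : nat) == a.+1 then
     \sum_(b' < n.+1) (if (b' : nat) == b then hc n b * dd (XX W a b) (XX W a.+1 b) else 0)
     else 0) + (if (a' : nat) == a then
     \sum_(b' < n.+1) (if (b' : nat) == b.+1 then vc n a b * dd (XX W a b) (XX W a b.+1) else 0)
     else 0))).
  apply: eq_bigr => a' _.
  case: (eqVneq (a' : nat) a.+1) => h1.
    have h2 : (a' : nat) != a by rewrite h1 (gtn_eqF (ltnSn _)).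
    rewrite (negbTE h2) addr0; apply: eq_bigr => b' _.
    rewrite /= h1 eqxx andbT.
    case: eqP => hb /=; last by rewrite -h1 (negbTE h2) /= mul0r.
    have -> : a' = inord a.+1 by apply: val_inj; rewrite /= h1 inordK // -h1.
    have -> : b' = b by apply: val_inj.
    by rewrite /hc /dd /XX !inord_val.
  rewrite add0r /=.
  case: (eqVneq (a' : nat) a) => h2; last first.
    by apply: big1 => b' _; rewrite (negbTE h1) andbF mul0r.
  have ea : a' = a by apply: val_inj.
  rewrite ea; apply: eq_bigr => b' _.
  rewrite (ltn_eqF (ltnSn a)) andbF /=.
  case: eqP => hb; last by rewrite mul0r.
  have -> : b' = inord b.+1 by apply: val_inj; rewrite /= hb inordK // -hb.
  by rewrite /vc /dd /XX !inord_val.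
rewrite big_split /= !sum_nat_eqc.
by rewrite !leq_ord.
Qed.
Lemma cut_costE k (W : {set vertex k}) :
  cut_cost W = \sum_x \sum_y cedge x y * dd (x \in W) (y \in W).
Proof.
rewrite /cut_cost.
rewrite [RHS](bigID (fun x => x \in W)) /=.
have E1 : forall x, x \in W -> \sum_y cedge x y * dd (x \in W) (y \in W)
     = \sum_(y in ~: W) cedge x y.
  move=> x xW; rewrite [RHS]big_mkcond /=; apply: eq_bigr => y _.
  by rewrite xW inE /dd; case: (y \in W) => /=; rewrite ?mulr0 ?mulr1.
have E2 : forall x, x \notin W -> \sum_y cedge x y * dd (x \in W) (y \in W)
     = \sum_(y in W) cedge x y.
  move=> x xW; rewrite [RHS]big_mkcond /=; apply: eq_bigr => y _.
  by rewrite (negbTE xW) /dd; case: (y \in W) => /=; rewrite ?mulr0 ?mulr1.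
rewrite (eq_bigr _ E1) (eq_bigr _ E2).
rewrite /cost.
under eq_bigr do rewrite big_split /=.
rewrite big_split /=; congr (_ + _).
rewrite exchange_big /=.
by apply: eq_bigl => x; rewrite inE.
Qed.

Lemma cut_costC k (W : {set vertex k}) : cut_cost (~: W) = cut_cost W.
Proof.
rewrite !cut_costE; apply: eq_bigr => x _; apply: eq_bigr => y _.
by rewrite !inE /dd; case: (x \in W); case: (y \in W).
Qed.

Lemma pair_sum n (F : 'I_n.+1 * 'I_n.+1 -> rat) :
  \sum_p F p = \sum_(a < n.+1) \sum_(b < n.+1) F (a, b).
Proof. by rewrite pair_bigA; apply: eq_bigr => -[a b]. Qed.

Lemma vt_inner n (W : {set vertex n.+1}) (b : 'I_n.+1) :
  \sum_(p : 'I_n.+1 * 'I_n.+1) cedge (inr (inl b)) (inl p) *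
     dd (inr (inl b) \in W) (inl p \in W) = K4 n.+1 * dd (vt b \in W) (XX W 0 b).
Proof.
transitivity (\sum_(a' < n.+1) (if (a' : nat) == 0%N then
   \sum_(b' < n.+1) (if (b' : nat) == b then K4 n.+1 * dd (vt b \in W) (XX W 0 b) else 0)
   else 0)); last by rewrite !sum_nat_eqc !leq_ord.
rewrite pair_sum /=; apply: eq_bigr => a' _.
case: eqP => ha /=; last by apply: big1 => b' _; rewrite mul0r.
apply: eq_bigr => b' _.
case: (eqVneq b' b) => hb; last first.
  by rewrite mul0r ifN // (inj_eq val_inj).
rewrite hb eqxx.
have -> : a' = inord 0 by apply: val_inj; rewrite /= ha inordK.
by rewrite /XX inord_val.
Qed.

Lemma ht_inner n (W : {set vertex n.+1}) (a : 'I_n.+1) :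
  \sum_(p : 'I_n.+1 * 'I_n.+1) cedge (inr (inr a)) (inl p) *
     dd (inr (inr a) \in W) (inl p \in W) = K4 n.+1 * dd (ht a \in W) (XX W a 0).
Proof.
transitivity (\sum_(a' < n.+1) (if (a' : nat) == a then
   \sum_(b' < n.+1) (if (b' : nat) == 0%N then K4 n.+1 * dd (ht a \in W) (XX W a 0) else 0)
   else 0)); last by rewrite !sum_nat_eqc !leq_ord.
rewrite pair_sum /=; apply: eq_bigr => a' _.
case: (eqVneq a' a) => ha; last first.
  rewrite ifN ?(inj_eq val_inj) //; apply: big1 => b' _.
  by rewrite andbF mul0r.
rewrite ha eqxx; apply: eq_bigr => b' _.
rewrite andbT; case: eqP => hb /=; last by rewrite mul0r.
have -> : b' = inord 0 by apply: val_inj; rewrite /= hb inordK.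
by rewrite /XX inord_val.
Qed.

Lemma decomp n (W : {set vertex n.+1}) :
  cut_cost W = TV W + TH W + \sum_(b < n.+1) Rr W b + \sum_(a < n.+1) Cc W a.
Proof.
rewrite cut_costE big_sumType.
have -> : \sum_(p : 'I_n.+1 * 'I_n.+1) \sum_y cedge (inl p) y * dd (inl p \in W) (y \in W)
   = \sum_(b < n.+1) Rr W b + \sum_(a < n.+1) Cc W a.
  transitivity (\sum_(a < n.+1) \sum_(b < n.+1) (hterm W a b + vterm W a b)).
    rewrite pair_sum; apply: eq_bigr => a _; apply: eq_bigr => b _.
    rewrite big_sumType /= grid_inner big1 ?addr0 // => s _.
    by rewrite mul0r.
  under eq_bigr do rewrite big_split /=.
  by rewrite big_split /= exchange_big.
rewrite big_sumType.
have -> : \sum_(b < n.+1) \sum_y cedge (inr (inl b)) y * dd (inr (inl b) \in W) (y \in W)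
   = TV W.
  apply: eq_bigr => b _; rewrite big_sumType vt_inner big1 => [|s _]; last by case: s => s; rewrite mul0r.
  by rewrite /= addr0.
have -> : \sum_(a < n.+1) \sum_y cedge (inr (inr a)) y * dd (inr (inr a) \in W) (y \in W)
   = TH W.
  apply: eq_bigr => a _; rewrite big_sumType ht_inner big1 => [|s _]; last by case: s => s; rewrite mul0r.
  by rewrite /= addr0.
by rewrite /= addrC addrA.
Qed.

Lemma K4_gt0 k : (0 < k)%N -> 0 < K4 k.
Proof. by move=> hk; rewrite /K4 ltr0n expn_gt0 hk. Qed.

Lemma eps_le k m1 m2 : (0 < k)%N -> (m1 <= m2)%N -> eps k m1 <= eps k m2.
Proof.
move=> hk hm; rewrite /eps ler_pM2r ?invr_gt0 ?K4_gt0 //.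
by rewrite ler_nat.
Qed.

Lemma eps_lt k m1 m2 : (0 < k)%N -> (m1 < m2)%N -> eps k m1 < eps k m2.
Proof.
move=> hk hm; rewrite /eps ltr_pM2r ?invr_gt0 ?K4_gt0 //.
by rewrite ltr_nat.
Qed.

Lemma eps_ge0 k m : (0 < k)%N -> 0 <= eps k m.
Proof. by move=> hk; rewrite /eps divr_ge0 // ?ler0n // ltW // K4_gt0. Qed.

Lemma small_eps n i m : (i <= n)%N -> (m <= n)%N -> i%:R * eps n.+1 m < 1.
Proof.
move=> hi hm; rewrite /eps mulrA -natrM ltr_pdivrMr ?K4_gt0 // mul1r /K4 ltr_nat.
have : (i * m <= n * n)%N by apply: leq_mul.
move=> h; apply: (leq_ltn_trans h); rewrite !expnS expn0.
by nia.
Qed.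

Lemma K4_big n i j : (i <= n)%N -> (j <= n)%N -> i%:R + j%:R < K4 n.+1.
Proof.
move=> hi hj; rewrite -natrD /K4 ltr_nat.
rewrite !expnS expn0.
by nia.
Qed.

Lemma sum_lt_gen (c : rat) j k :
  \sum_(b < k) (if (b < j)%N then c else 0) = c *+ minn j k.
Proof.
elim: k => [|k IH]; first by rewrite big_ord0 minn0.
rewrite big_ord_recr /= IH.
case: (leqP j k) => h.
  by rewrite addr0 (minn_idPl (leqW h)).
by rewrite (minn_idPr h) mulrS addrC.
Qed.

Lemma sum_lt n (c : rat) j : (j <= n.+1)%N ->
  \sum_(b < n.+1) (if (b < j)%N then c else 0) = c *+ j.
Proof. by move=> h; rewrite sum_lt_gen (minn_idPl h). Qed.

Lemma le_sum_term n (F : nat -> rat) m : (forall x, 0 <= F x) -> (m <= n)%N ->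
  F m <= \sum_(x < n.+1) F x.
Proof.
move=> h0 hm; rewrite (bigD1 (inord m)) //= inordK // lerDl.
by apply: sumr_ge0 => x _.
Qed.

Lemma le_sum_term2 n (F : nat -> rat) m1 m2 : (forall x, 0 <= F x) ->
  m1 != m2 -> (m1 <= n)%N -> (m2 <= n)%N ->
  F m1 + F m2 <= \sum_(x < n.+1) F x.
Proof.
move=> h0 hne h1 h2.
rewrite (bigD1 (inord m1)) //= inordK // lerD2l.
rewrite (bigD1 (inord m2)) /=; last first.
  by apply: contra hne => /eqP/(congr1 val); rewrite /= !inordK // => ->.
by rewrite inordK // lerDl; apply: sumr_ge0 => x _.
Qed.

Lemma lt_sum n (F G : nat -> rat) m : (forall x, G x <= F x) -> G m < F m ->
  (m <= n)%N -> \sum_(x < n.+1) G x < \sum_(x < n.+1) F x.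
Proof.
move=> hle hlt hm.
rewrite (bigD1 (inord m)) //= [X in _ < X](bigD1 (inord m)) //= inordK //.
by apply: ltr_leD => //; apply: ler_sum => x _.
Qed.

Lemma le_sum n (F G : nat -> rat) : (forall x, G x <= F x) ->
  \sum_(x < n.+1) G x <= \sum_(x < n.+1) F x.
Proof. by move=> h; apply: ler_sum => x _. Qed.

Lemma XX_Wij n i j a b : (a <= n)%N -> (b <= n)%N ->
  XX (Wij n.+1 i j) a b = (a < i)%N && (b < j)%N.
Proof. by move=> ha hb; rewrite /XX /Wij !inE /= !inordK. Qed.

Lemma Rr_Wij n i j b : (1 <= i)%N -> (i <= n)%N -> (j <= n)%N -> (b <= n)%N ->
  Rr (Wij n.+1 i j) b = if (b < j)%N then 1 else 0.
Proof.
move=> hi1 hin hjn hb.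
transitivity (\sum_(a < n.+1) (if (a : nat) == i.-1 then
   (if (b < j)%N then 1 else 0) else 0 : rat)); last first.
  by rewrite sum_nat_eqc ifT //; lia.
apply: eq_bigr => a _; rewrite /hterm.
case: ifP => han; last first.
  by rewrite ifN //; apply/negP => /eqP; lia.
rewrite !XX_Wij //; last by lia.
case: eqP => hai.
  have -> : (a < i)%N by lia.
  have -> : (a.+1 < i)%N = false by apply/negP; lia.
  case: ifP => hbj; last by rewrite /dd /= mulr0.
  by rewrite /hc /dd /= mulr1 ifN //; apply/negP => /eqP; lia.
have -> : (a.+1 < i)%N = (a < i)%N by apply/idP/idP; lia.
by rewrite /dd eqxx mulr0.
Qed.

Lemma Cc_Wij n i j a : (1 <= j)%N -> (i <= n)%N -> (j <= n)%N -> (a <= n)%N ->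
  Cc (Wij n.+1 i j) a = if (a < i)%N then 1 - eps n.+1 j else 0.
Proof.
move=> hj1 hin hjn ha.
transitivity (\sum_(b < n.+1) (if (b : nat) == j.-1 then
   (if (a < i)%N then 1 - eps n.+1 j else 0) else 0)); last first.
  by rewrite sum_nat_eqc ifT //; lia.
apply: eq_bigr => b _; rewrite /vterm.
case: ifP => hbn; last first.
  by rewrite ifN //; apply/negP => /eqP; lia.
rewrite !XX_Wij //; last by lia.
case: eqP => hbj.
  have -> : (b < j)%N by lia.
  have -> : (b.+1 < j)%N = false by apply/negP; lia.
  case: ifP => hai; last by rewrite /dd /= mulr0.
  rewrite /vc /dd /= mulr1 ifN; last by apply/negP => /eqP; lia.
  by have -> : b.+1 = j by lia.
have -> : (b.+1 < j)%N = (b < j)%N by apply/idP/idP; lia.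
by rewrite /dd eqxx mulr0.
Qed.

Lemma TV_Wij n i j : (1 <= i)%N -> TV (Wij n.+1 i j) = 0.
Proof.
move=> hi; apply: big1 => b _; rewrite XX_Wij ?leq_ord // /dd /Wij !inE /=.
by rewrite hi orbF eqxx mulr0.
Qed.

Lemma TH_Wij n i j : (1 <= j)%N -> TH (Wij n.+1 i j) = 0.
Proof.
move=> hj; apply: big1 => a _; rewrite XX_Wij ?leq_ord // /dd /Wij !inE /=.
by rewrite hj andbT orbF eqxx mulr0.
Qed.

Lemma cost_Wij n i j : (1 <= i)%N -> (i <= n)%N -> (1 <= j)%N -> (j <= n)%N ->
  cut_cost (Wij n.+1 i j) = j%:R + (1 - eps n.+1 j) *+ i.
Proof.
move=> hi1 hin hj1 hjn.
rewrite decomp TV_Wij // TH_Wij // !add0r.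
rewrite [X in X + _](eq_bigr (fun b : 'I_n.+1 => if (b < j)%N then 1 else 0)); last first.
  by move=> b _; rewrite Rr_Wij ?leq_ord.
rewrite [X in _ + X](eq_bigr (fun a : 'I_n.+1 => if (a < i)%N then 1 - eps n.+1 j else 0)); last first.
  by move=> a _; rewrite Cc_Wij ?leq_ord.
by rewrite !sum_lt ?(leqW hin) ?(leqW hjn) // -[j%:R]/(1 *+ j).
Qed.

Lemma K4_ge1 n : 1 <= K4 n.+1.
Proof. by rewrite /K4 ler1n expn_gt0. Qed.

Lemma eps_n_lt1 n : eps n.+1 n < 1.
Proof.
rewrite /eps ltr_pdivrMr ?K4_gt0 // mul1r /K4 ltr_nat !expnS expn0.
by nia.
Qed.

Lemma dd_ge0 x y : 0 <= dd x y.
Proof. by rewrite /dd ler0n. Qed.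

Lemma hc_ge1 n b : 1 <= hc n b.
Proof. by rewrite /hc; case: ifP => _ //; apply: K4_ge1. Qed.

Lemma vc_ge n a b : (b < n)%N -> 1 - eps n.+1 n <= vc n a b.
Proof.
move=> hb; rewrite /vc; case: ifP => _.
  have := K4_ge1 n; have : 0 <= eps n.+1 n by apply: eps_ge0.
  lra.
by rewrite lerD2l lerN2; apply: eps_le.
Qed.

Lemma vc_eq n a b : (a != n) -> vc n a b = 1 - eps n.+1 b.+1.
Proof. by move=> h; rewrite /vc (negbTE h). Qed.

Lemma vc_ge0 n a b : (b < n)%N -> 0 <= vc n a b.
Proof. by move=> hb; have := vc_ge a hb; have := eps_n_lt1 n; lra. Qed.

Lemma hterm_ge0 n (W : {set vertex n.+1}) a b : 0 <= hterm W a b.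
Proof.
rewrite /hterm; case: ifP => // _; apply: mulr_ge0 (dd_ge0 _ _).
by have := hc_ge1 n b; lra.
Qed.

Lemma vterm_ge0 n (W : {set vertex n.+1}) a b : 0 <= vterm W a b.
Proof.
rewrite /vterm; case: ifP => // hb; exact: mulr_ge0 (vc_ge0 _ hb) (dd_ge0 _ _).
Qed.

Lemma Rr_ge0 n (W : {set vertex n.+1}) b : 0 <= Rr W b.
Proof. by apply: sumr_ge0 => a _; apply: hterm_ge0. Qed.

Lemma Cc_ge0 n (W : {set vertex n.+1}) a : 0 <= Cc W a.
Proof. by apply: sumr_ge0 => b _; apply: vterm_ge0. Qed.

Lemma TV_ge0 n (W : {set vertex n.+1}) : 0 <= TV W.
Proof.
apply: sumr_ge0 => b _; apply: mulr_ge0 (dd_ge0 _ _).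
by have := K4_ge1 n; lra.
Qed.

Lemma TH_ge0 n (W : {set vertex n.+1}) : 0 <= TH W.
Proof.
apply: sumr_ge0 => b _; apply: mulr_ge0 (dd_ge0 _ _).
by have := K4_ge1 n; lra.
Qed.

Lemma change (f : nat -> bool) c d : (c <= d)%N -> f c != f d ->
  exists b, [/\ (c <= b)%N, (b < d)%N & f b != f b.+1].
Proof.
elim: d => [|d IH] hcd hf.
  by move: hcd; rewrite leqn0 => /eqP hc; rewrite hc eqxx in hf.
case: (eqVneq c d.+1) => [hc|hc]; first by rewrite hc eqxx in hf.
have hcd' : (c <= d)%N by lia.
case: (eqVneq (f c) (f d)) => hfd.
  exists d; split => //; by rewrite -hfd.
by have [b [h1 h2 h3]] := IH hcd' hfd; exists b; split => //; lia.
Qed.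

Lemma hterm_cut n (W : {set vertex n.+1}) a b : (a < n)%N ->
  XX W a b != XX W a.+1 b -> hterm W a b = hc n b.
Proof. by move=> ha hx; rewrite /hterm ha /dd hx mulr1. Qed.

Lemma vterm_cut n (W : {set vertex n.+1}) a b : (b < n)%N ->
  XX W a b != XX W a b.+1 -> vterm W a b = vc n a b.
Proof. by move=> hb hx; rewrite /vterm hb /dd hx mulr1. Qed.

Lemma Rr_cut1 n (W : {set vertex n.+1}) b c d : (c <= d)%N -> (d <= n)%N ->
  XX W c b != XX W d b -> 1 <= Rr W b.
Proof.
move=> hcd hdn hx.
have [a [h1 h2 h3]] := change (f := fun a => XX W a b) hcd hx.
apply: (le_trans (hc_ge1 n b)); rewrite -(hterm_cut (W := W) (a := a)) //; last by lia.
apply: (le_sum_term (F := fun a => hterm W a b)); last by lia.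
by move=> x; apply: hterm_ge0.
Qed.

Lemma Rr_cut2 n (W : {set vertex n.+1}) b c d e : (c <= d)%N -> (d <= e)%N -> (e <= n)%N ->
  XX W c b != XX W d b -> XX W d b != XX W e b -> 2%:R <= Rr W b.
Proof.
move=> hcd hde hen hx1 hx2.
have [a1 [h1 h2 h3]] := change (f := fun a => XX W a b) hcd hx1.
have [a2 [h4 h5 h6]] := change (f := fun a => XX W a b) hde hx2.
have ne : a1 != a2 by apply/negP => /eqP; lia.
have := le_sum_term2 (n := n) (F := fun a => hterm W a b) (m1 := a1) (m2 := a2)
   (fun x => hterm_ge0 W x b) ne ltac:(lia) ltac:(lia).
rewrite (hterm_cut (W := W) (a := a1)) //; last by lia.
rewrite (hterm_cut (W := W) (a := a2)) //; last by lia.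
have := hc_ge1 n b; rewrite /Rr; lra.
Qed.

Lemma Cc_cut1 n (W : {set vertex n.+1}) a c d : (c <= d)%N -> (d <= n)%N ->
  XX W a c != XX W a d -> exists b, [/\ (c <= b)%N, (b < d)%N & vc n a b <= Cc W a].
Proof.
move=> hcd hdn hx.
have [b [h1 h2 h3]] := change (f := fun b => XX W a b) hcd hx.
exists b; split => //; rewrite -(vterm_cut (W := W)) //; last by lia.
apply: (le_sum_term (F := fun b => vterm W a b)); last by lia.
by move=> x; apply: vterm_ge0.
Qed.

Lemma Cc_cut2 n (W : {set vertex n.+1}) a c d e : (c <= d)%N -> (d <= e)%N -> (e <= n)%N ->
  XX W a c != XX W a d -> XX W a d != XX W a e ->
  exists b1 b2, [/\ (c <= b1)%N, (b1 < d)%N, (d <= b2)%N, (b2 < e)%N &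
     vc n a b1 + vc n a b2 <= Cc W a].
Proof.
move=> hcd hde hen hx1 hx2.
have [b1 [h1 h2 h3]] := change (f := fun b => XX W a b) hcd hx1.
have [b2 [h4 h5 h6]] := change (f := fun b => XX W a b) hde hx2.
exists b1, b2; split => //.
rewrite -(vterm_cut (W := W) (b := b1)) //; last by lia.
rewrite -(vterm_cut (W := W) (b := b2)) //; last by lia.
apply: (le_sum_term2 (F := fun b => vterm W a b)); first by move=> x; apply: vterm_ge0.
all: lia.
Qed.

Lemma le_sumb n (F G : nat -> rat) : (forall x, (x <= n)%N -> G x <= F x) ->
  \sum_(x < n.+1) G x <= \sum_(x < n.+1) F x.
Proof. by move=> h; apply: ler_sum => x _; apply: h; rewrite -ltnS. Qed.

Lemma lt_sumb n (F G : nat -> rat) m : (forall x, (x <= n)%N -> G x <= F x) ->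
  G m < F m -> (m <= n)%N -> \sum_(x < n.+1) G x < \sum_(x < n.+1) F x.
Proof.
move=> hle hlt hm.
rewrite (bigD1 (inord m)) //= [X in _ < X](bigD1 (inord m)) //= inordK //.
by apply: ltr_leD => //; apply: ler_sum => x _; apply: hle; rewrite -ltnS.
Qed.

Lemma le_sum_ord n (F : 'I_n.+1 -> rat) i0 : (forall i, 0 <= F i) ->
  F i0 <= \sum_i F i.
Proof.
move=> h0; rewrite (bigD1 i0) //= lerDl.
by apply: sumr_ge0 => x _.
Qed.

Lemma heavy n p q (X : rat) : K4 n.+1 * dd p q <= X -> X < K4 n.+1 -> p = q.
Proof.
rewrite /dd; case: p; case: q => //= h1 h2; rewrite mulr1 in h1; lra.
Qed.

Lemma main_lb n i j (hi1 : (1 <= i)%N) (hin : (i <= n)%N) (hj1 : (1 <= j)%N)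
  (hjn : (j <= n)%N) (W : {set vertex n.+1})
  (hv : forall b : 'I_n.+1, (vt b \in W) = (b < j)%N)
  (hh : forall a : 'I_n.+1, (ht a \in W) = (a < i)%N)
  (hne : W != Wij n.+1 i j) : cut_cost (Wij n.+1 i j) < cut_cost W.
Proof.
rewrite cost_Wij // -[(1 - eps n.+1 j) *+ i]mulr_natl mulrBr mulr1.
have e0 : 0 <= i%:R * eps n.+1 j by apply: mulr_ge0; [apply: ler0n | apply: eps_ge0].
have ejn : i%:R * eps n.+1 j <= i%:R * eps n.+1 n.
  by apply: ler_wpM2l; [apply: ler0n | apply: eps_le].
have en1 : i%:R * eps n.+1 n < 1 by apply: small_eps.
have hK := K4_big hin hjn.
rewrite ltNge; apply/negP => Hle.
have dec := decomp W.
have tv0 := TV_ge0 W; have th0 := TH_ge0 W.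
have sr0 : 0 <= \sum_(b < n.+1) Rr W b by apply: sumr_ge0 => b _; apply: Rr_ge0.
have sc0 : 0 <= \sum_(a < n.+1) Cc W a by apply: sumr_ge0 => b _; apply: Cc_ge0.
set c := cut_cost W in Hle dec.
set SR := \sum_(b < n.+1) Rr W b in dec sr0.
set SC := \sum_(a < n.+1) Cc W a in dec sc0.
have cK : c < K4 n.+1 by lra.
have F1 : forall b, (b <= n)%N -> XX W 0 b = (b < j)%N.
  move=> b hb.
  have := le_sum_ord (F := fun b : 'I_n.+1 => K4 n.+1 * dd (vt b \in W) (XX W 0 b))
    (inord b) (fun b => mulr_ge0 (le_trans ler01 (K4_ge1 n)) (dd_ge0 _ _)).
  rewrite /= -/(TV W) hv /XX !inordK // => h.
  by apply: esym; apply: (heavy (n := n) (X := c)); lra.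
have F2 : forall a, (a <= n)%N -> XX W a 0 = (a < i)%N.
  move=> a ha.
  have := le_sum_ord (F := fun a : 'I_n.+1 => K4 n.+1 * dd (ht a \in W) (XX W a 0))
    (inord a) (fun b => mulr_ge0 (le_trans ler01 (K4_ge1 n)) (dd_ge0 _ _)).
  rewrite /= -/(TH W) hh /XX !inordK // => h.
  by apply: esym; apply: (heavy (n := n) (X := c)); lra.
have F3 : forall a, (a < n)%N -> XX W a n = XX W a.+1 n.
  move=> a ha.
  have h1 : hterm W a n <= Rr W n.
    by apply: (le_sum_term (F := fun a => hterm W a n)) => //; [move=> x; apply: hterm_ge0 | lia].
  have h2 : Rr W n <= SR by apply: le_sum_term => // x; apply: Rr_ge0.
  apply: (heavy (n := n) (X := c)) => //.
  by move: h1; rewrite /hterm ha /hc eqxx => h1; lra.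
have F4 : forall b, (b < n)%N -> XX W n b = XX W n b.+1.
  move=> b hb.
  have h1 : vterm W n b <= Cc W n.
    by apply: (le_sum_term (F := fun b => vterm W n b)) => //; [move=> x; apply: vterm_ge0 | lia].
  have h2 : Cc W n <= SC by apply: le_sum_term => // x; apply: Cc_ge0.
  apply: (heavy (n := n) (X := c)) => //.
  by move: h1; rewrite /vterm hb /vc eqxx => h1; lra.
have G3 : forall a, (a <= n)%N -> XX W a n = false.
  elim=> [|a IH] ha; first by rewrite F1 // ltnNge hjn.
  by rewrite -F3 ?IH //; lia.
have G4 : forall b, (b <= n)%N -> XX W n b = false.
  elim=> [|b IH] hb; first by rewrite F2 // ltnNge hin.
  by rewrite -F4 ?IH //; lia.
have SRj : j%:R <= SR.
  rewrite -[j%:R]/(1 *+ j) -(sum_lt (n := n) 1 (leqW hjn)).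
  apply: (le_sumb (n := n) (F := Rr W) (G := fun b => if (b < j)%N then 1 else 0)) => b hb.
  case: ifP => hbj; last exact: Rr_ge0.
  by apply: (Rr_cut1 (c := 0) (d := n)) => //; rewrite F1 // G4 // hbj.
case: (boolP [exists a : 'I_n.+1, (a < i)%N && XX W a j]).
  case/existsP => a0 /andP [ha0i ha0j].
  have SR2 : j%:R + 2%:R <= SR.
    have -> : j%:R + 2%:R = \sum_(x < n.+1)
        ((if (x < j)%N then 1 else 0) + (if (x : nat) == j then 2%:R else 0) : rat).
      by rewrite big_split /= sum_lt ?sum_nat_eqc ?hjn // (leqW hjn).
    apply: (le_sumb (n := n) (F := Rr W) (G := fun x =>
       (if (x < j)%N then 1 else 0) + (if x == j then 2%:R else 0))) => b hb.
    case: (ltngtP b j) => hbj.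
    - rewrite addr0; apply: (Rr_cut1 (c := 0) (d := n)) => //.
      by rewrite F1 // G4 // hbj.
    - by rewrite add0r; apply: Rr_ge0.
    - rewrite add0r hbj; apply: (Rr_cut2 (c := 0) (d := a0) (e := n)) => //.
      + by rewrite -ltnS.
      + by rewrite F1 // ltnn ha0j.
      by rewrite ha0j G4.
  have SCi : i%:R * (1 - eps n.+1 n) <= SC.
    rewrite mulr_natl -(sum_lt (n := n) _ (leqW hin)).
    apply: (le_sumb (n := n) (F := Cc W)
      (G := fun a => if (a < i)%N then 1 - eps n.+1 n else 0)) => a ha.
    case: ifP => hai; last exact: Cc_ge0.
    have [b [_ hb hc]] := Cc_cut1 (W := W) (a := a) (c := 0) (d := n) (leq0n _) (leqnn _)
      ltac:(by rewrite F2 // G3 // hai).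
    exact: le_trans (vc_ge a hb) hc.
  move: SCi; rewrite mulrBr mulr1 => SCi.
  lra.
rewrite negb_exists => /forallP noE.
have noE' : forall a, (a <= n)%N -> (a < i)%N -> XX W a j = false.
  move=> a ha hai; have := noE (inord a); rewrite inordK // hai /=.
  by move/negbTE.
case: (boolP [exists a : 'I_n.+1, exists b : 'I_n.+1, XX W a b != ((a < i)%N && (b < j)%N)]);
  last first.
  rewrite negb_exists => /forallP hall; case/negP: hne; apply/eqP/setP.
  move=> [[a b]|[b|a]]; rewrite /Wij !inE /=.
  - have := hall a; rewrite negb_exists => /forallP /(_ b); rewrite negbK XXE => /eqP ->.
    by [].
  - by rewrite hv ?orbF.
  - by rewrite hh ?orbF.
case/existsP => a0 /existsP [b0 hdev].
have hcol : forall a, (a <= n)%N -> (a < i)%N -> 1 - eps n.+1 j <= Cc W a.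
  move=> a ha hai.
  have [b [_ hb hc]] := Cc_cut1 (W := W) (a := a) (c := 0) (d := j) (leq0n _) hjn
      ltac:(by rewrite F2 // noE' // hai).
  apply: (le_trans _ hc); rewrite vc_eq; last by rewrite neq_ltn (leq_trans hai hin).
  by rewrite lerD2l lerN2; apply: eps_le.
have SCi : i%:R * (1 - eps n.+1 j) < SC.
  rewrite mulr_natl -(sum_lt (n := n) _ (leqW hin)).
  apply: (lt_sumb (n := n) (F := Cc W)
      (G := fun a => if (a < i)%N then 1 - eps n.+1 j else 0) (m := a0)); last by rewrite -ltnS.
    by move=> a ha; case: ifP => hai; [exact: hcol | exact: Cc_ge0].
  have ha0n : (a0 <= n)%N by rewrite -ltnS.
  have hb0n : (b0 <= n)%N by rewrite -ltnS.
  case: ifP => hai.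
    move: hdev; rewrite hai /=; case hbj: (b0 < j)%N => hdev.
      have hx : XX W a0 b0 = false by move: hdev; case: (XX W a0 b0).
      have [b [_ hb hc]] := Cc_cut1 (W := W) (a := a0) (c := 0) (d := b0) (leq0n _) hb0n
        ltac:(by rewrite F2 // hai hx).
      apply: (lt_le_trans _ hc); rewrite vc_eq; last by rewrite neq_ltn (leq_trans hai hin).
      by rewrite ltrD2l ltrN2; apply: eps_lt => //; exact: leq_ltn_trans hb hbj.
    have hx : XX W a0 b0 = true by move: hdev; case: (XX W a0 b0).
    have hb0j : (j < b0)%N.
      rewrite ltn_neqAle leqNgt hbj andbT; apply/negP => /eqP hjb.
      by move: hx; rewrite -hjb noE'.
    have [b1 [b2 [_ hb1 _ hb2 hc]]] := Cc_cut2 (W := W) (a := a0) (c := 0) (d := j) (e := b0)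
        (leq0n _) (ltnW hb0j) hb0n
        ltac:(by rewrite F2 // noE' // hai) ltac:(by rewrite noE' // hx).
    apply: (lt_le_trans _ hc).
    have h1 : 1 - eps n.+1 j <= vc n a0 b1.
      rewrite vc_eq; last by rewrite neq_ltn (leq_trans hai hin).
      by rewrite lerD2l lerN2; apply: eps_le.
    have h2 := vc_ge a0 (leq_trans hb2 hb0n : (b2 < n)%N).
    have h3 := eps_n_lt1 n.
    lra.
  move: hdev; rewrite hai /= => hdev.
  have hx : XX W a0 b0 = true by move: hdev; case: (XX W a0 b0).
  have [b [_ hb hc]] := Cc_cut1 (W := W) (a := a0) (c := 0) (d := b0) (leq0n _) hb0n
    ltac:(by rewrite F2 // hai hx).
  have h2 := vc_ge a0 (leq_trans hb hb0n : (b < n)%N).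
  have h3 := eps_n_lt1 n.
  lra.
move: SCi; rewrite mulrBr mulr1 => SCi.
lra.
Qed.

Theorem lemma3p7 (k : nat) (hk : (3 <= k)%N) (i j : nat)
    (hi1 : (1 <= i)%N) (hik : (i <= k.-1)%N)
    (hj1 : (1 <= j)%N) (hjk : (j <= k.-1)%N) :
  [/\ separating (Sij k i j) (Wij k i j),
      (forall W' : {set vertex k}, separating (Sij k i j) W' ->
         W' != Wij k i j -> W' != ~: Wij k i j ->
         cut_cost (Wij k i j) < cut_cost W')
    & cut_cost (Wij k i j) =
        i%:R + j%:R - \sum_(1 <= alpha < i.+1) eps k j].
Proof.
case: k hk hik hjk => [//|n] hk /= hin hjn.
split.
- rewrite /separating; apply/orP; left; apply/eqP/setP => -[[a b]|[b|a]];
    by rewrite /Wij /Sij /terminals !inE /= ?andbF ?andbT ?orbF.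
- move=> W' /orP [] /eqP /setP hsep hne1 hne2.
    apply: main_lb => //.
    + move=> b; have := hsep (vt b).
      by rewrite /Sij /terminals !inE /= andbT.
    + move=> a; have := hsep (ht a).
      by rewrite /Sij /terminals !inE /= andbT.
  rewrite -(cut_costC W'); apply: main_lb => //.
  + move=> b; have := hsep (vt b).
    by rewrite /Sij /terminals !inE /= !andbT => ->; rewrite negbK.
  + move=> a; have := hsep (ht a).
    by rewrite /Sij /terminals !inE /= !andbT => ->; rewrite negbK.
  + by apply: contra hne2 => /eqP <-; rewrite setCK.
- rewrite cost_Wij // sumr_const_nat subn1 /= -[(1 - _) *+ i]mulr_natl -[eps _ _ *+ i]mulr_natl mulrBr mulr1.
  lra.
Qed.
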